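(* Let $A\in\mathbb{R}^{m\times n}$, let $k\geq1$, $\alpha>0$, $\Delta\geq 0$, and $0<L\leq U$ be such that \[ L\|v\|_2\leq\|Av\|_1\leq U\|v\|_2 \] for all $(1+\alpha^2)k$-sparse vectors $v\in\mathbb{R}^n$. Let $S\subset[n]$ be fixed with $|S|=k$. Then for all \[ v\in V_S=\{v\in\mathbb{R}^n : \Delta+\|v_S\|_1\geq\|v_{\overline{S}}\|_1\} \] we have \[ \frac{L}{1+\alpha}\left(\alpha-\frac{U}{L}\right)\|v\|_2-\frac{2U\Delta}{\alpha\sqrt{k}} \leq \|Av\|_1 \leq U\left(1+\frac{1}{\alpha}\right)\|v\|_2+\frac{U\Delta}{\alpha\sqrt{k}}. \]
   Context: For $v\in\mathbb{R}^n$ and $T\subset[n]$, $v_T$ denotes $v$ with all entries whose indices lie outside $T$ set to $0$, and $\overline{S}=[n]\setminus S$. A vector is $s$-sparse if it has at most $s$ nonzero entries. *)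

(* Defs.v *)
From HB Require Import structures.
From mathcomp Require Import all_boot all_order all_algebra.
Set Implicit Arguments. Unset Strict Implicit. Unset Printing Implicit Defensive.
Import Order.TTheory GRing.Theory Num.Theory.
Local Open Scope ring_scope.

Definition norm1 (R : rcfType) (n : nat) (v : 'cV[R]_n) : R :=
  \sum_(i < n) `|v i 0|.

Definition norm2 (R : rcfType) (n : nat) (v : 'cV[R]_n) : R :=
  Num.sqrt (\sum_(i < n) (v i 0) ^+ 2).

Definition restr (R : rcfType) (n : nat) (T : {set 'I_n}) (v : 'cV[R]_n) : 'cV[R]_n :=
  \col_i (if i \in T then v i 0 else 0).

Definition sparse (R : rcfType) (n : nat) (s : R) (v : 'cV[R]_n) : Prop :=
  (#|[set i | v i 0 != 0]|%:R <= s).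

(* Main.v *)
Require Import Defs.
From HB Require Import structures.
From mathcomp Require Import all_boot all_order all_algebra.
From mathcomp Require Import ring lra.
Set Implicit Arguments. Unset Strict Implicit. Unset Printing Implicit Defensive.
Import Order.TTheory GRing.Theory Num.Theory.
Local Open Scope ring_scope.

Lemma Eprod (R : rcfType) (P n : nat) (q : 'I_n -> R) (G : 'I_P -> 'I_n -> R) :
  \sum_(f : {ffun 'I_P -> 'I_n}) (\prod_j q (f j)) * \prod_j G j (f j)
  = \prod_j \sum_i q i * G j i.
Proof. rewrite bigA_distr_bigA /=; apply: eq_bigr => f _; by rewrite -big_split. Qed.

Lemma E1 (R : rcfType) (P n : nat) (q : 'I_n -> R) : \sum_i q i = 1 ->
  \sum_(f : {ffun 'I_P -> 'I_n}) (\prod_j q (f j)) = 1.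
Proof.
move=> hq.
transitivity (\sum_(f : {ffun 'I_P -> 'I_n}) (\prod_j q (f j)) * \prod_(j < P) (fun _ _ => (1:R)) j (f j)).
  by apply: eq_bigr => f _; rewrite [X in _ = _ * X]big1 ?mulr1.
rewrite (Eprod q (fun _ _ => 1)); apply: big1 => j _; under eq_bigr do rewrite mulr1; exact: hq.
Qed.

Lemma E2 (R : rcfType) (P n : nat) (q : 'I_n -> R) (j0 : 'I_P) (r : 'I_n) :
  \sum_i q i = 1 ->
  \sum_(f : {ffun 'I_P -> 'I_n}) (\prod_j q (f j)) * ((f j0 == r)%:R) = q r.
Proof.
move=> hq.
pose G := fun j i => if j == j0 then ((i == r)%:R : R) else 1.
transitivity (\sum_(f : {ffun 'I_P -> 'I_n}) (\prod_j q (f j)) * \prod_j G j (f j)).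
  apply: eq_bigr => f _; congr (_ * _).
  rewrite (bigD1 j0) //= /G eqxx big1 ?mulr1 // => j /negbTE ->; done.
have Hr : \sum_i q i * (i == r)%:R = q r.
  rewrite (bigD1 r) //= eqxx mulr1 big1 ?addr0 // => i /negbTE ->; by rewrite mulr0.
rewrite (Eprod q G) (bigD1 j0) //= /G eqxx Hr [X in _ * X]big1 ?mulr1 //.
by move=> j /negbTE ->; under eq_bigr do rewrite mulr1.
Qed.

Lemma E3 (R : rcfType) (P n : nat) (q : 'I_n -> R) (j1 j2 : 'I_P) (r : 'I_n) :
  \sum_i q i = 1 -> j1 != j2 ->
  \sum_(f : {ffun 'I_P -> 'I_n}) (\prod_j q (f j)) * ((f j1 == r)%:R * (f j2 == r)%:R)
  = q r ^+ 2.
Proof.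
move=> hq hj.
pose G := fun j i => if (j == j1) || (j == j2) then ((i == r)%:R : R) else 1.
transitivity (\sum_(f : {ffun 'I_P -> 'I_n}) (\prod_j q (f j)) * \prod_j G j (f j)).
  apply: eq_bigr => f _; congr (_ * _).
  rewrite (bigD1 j1) //= /G eqxx (bigD1 j2) /=; last by rewrite eq_sym.
  rewrite eqxx orbT big1 ?mulr1 // => j /andP [/negbTE -> /negbTE ->]; done.
rewrite (Eprod q G) (bigD1 j1) //= /G eqxx (bigD1 j2) /=; last by rewrite eq_sym.
have Hr : \sum_i q i * (i == r)%:R = q r.
  rewrite (bigD1 r) //= eqxx mulr1 big1 ?addr0 // => i /negbTE ->; by rewrite mulr0.
rewrite eqxx orbT Hr [X in _ * (_ * X)]big1 ?mulr1 ?expr2 //.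
by move=> j /andP [/negbTE -> /negbTE ->]; under eq_bigr do rewrite mulr1.
Qed.

Lemma Ecnt (R : rcfType) (P n : nat) (q : 'I_n -> R) (r : 'I_n) :
  \sum_i q i = 1 ->
  \sum_(f : {ffun 'I_P -> 'I_n}) (\prod_j q (f j)) * (\sum_(j < P) ((f j == r)%:R : R))
  = P%:R * q r.
Proof.
move=> hq; under eq_bigr do rewrite mulr_sumr.
rewrite exchange_big /=; under eq_bigr do rewrite E2 //.
by rewrite sumr_const card_ord mulr_natl.
Qed.

Lemma bmul (R : rcfType) (b : bool) : (b%:R * b%:R : R) = b%:R.
Proof. by case: b; rewrite ?mulr1 ?mulr0. Qed.

Lemma sum_delta (R : rcfType) (I : finType) (j1 : I) (c : R) :
  \sum_j2 ((j1 == j2)%:R * c) = c.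
Proof.
rewrite (bigD1 j1) //= eqxx mul1r big1 ?addr0 // => j hj.
by rewrite eq_sym (negbTE hj) mul0r.
Qed.

Lemma Ecnt2 (R : rcfType) (P n : nat) (q : 'I_n -> R) (r : 'I_n) :
  \sum_i q i = 1 ->
  \sum_(f : {ffun 'I_P -> 'I_n}) (\prod_j q (f j)) * (\sum_(j < P) ((f j == r)%:R : R)) ^+ 2
  = P%:R * q r + P%:R * (P%:R - 1) * q r ^+ 2.
Proof.
move=> hq.
transitivity (\sum_(j1 < P) \sum_(j2 < P) \sum_(f : {ffun 'I_P -> 'I_n})
    (\prod_j q (f j)) * ((f j1 == r)%:R * (f j2 == r)%:R)).
  under eq_bigr => f _ do rewrite expr2 big_distrlr mulr_sumr.
  rewrite exchange_big /=; apply: eq_bigr => j1 _.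
  under eq_bigr => f _ do rewrite mulr_sumr.
  by rewrite exchange_big.
have H : forall j1 j2 : 'I_P, \sum_(f : {ffun 'I_P -> 'I_n})
    (\prod_j q (f j)) * ((f j1 == r)%:R * (f j2 == r)%:R)
    = q r ^+ 2 + (j1 == j2)%:R * (q r - q r ^+ 2).
  move=> j1 j2; have [<-|hne] := eqVneq j1 j2.
    under eq_bigr do rewrite bmul.
    by rewrite E2 // (_ : true%:R = 1 :> R) // mul1r addrC subrK.
  by rewrite (@E3 R P n q j1 j2 r hq hne) (_ : false%:R = 0 :> R) // mul0r addr0.
under eq_bigr => j1 _ do under eq_bigr => j2 _ do rewrite H.
under eq_bigr => j1 _ do rewrite big_split /= sumr_const card_ord sum_delta.
rewrite sumr_const card_ord; have mn : forall x : R, x *+ P = P%:R * x by move=> x; rewrite mulr_natl.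
ring.
Qed.

Definition sq (R : rcfType) (n : nat) (x : 'cV[R]_n) : R := \sum_i x i 0 ^+ 2.

Lemma norm1_ge0 (R : rcfType) (n : nat) (x : 'cV[R]_n) : 0 <= norm1 x.
Proof. by apply: sumr_ge0 => i _. Qed.

Lemma sq_ge0 (R : rcfType) (n : nat) (x : 'cV[R]_n) : 0 <= sq x.
Proof. by apply: sumr_ge0 => i _; rewrite sqr_ge0. Qed.

Lemma norm1_sum (R : rcfType) (m : nat) (I : finType) (M : I -> 'cV[R]_m) :
  norm1 (\sum_f M f) <= \sum_f norm1 (M f).
Proof.
rewrite /norm1 exchange_big /=; apply: ler_sum => i _; rewrite summxE.
exact: ler_norm_sum.
Qed.

Lemma norm1Z (R : rcfType) (m : nat) (a : R) (M : 'cV[R]_m) :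
  0 <= a -> norm1 (a *: M) = a * norm1 M.
Proof.
move=> ha; rewrite /norm1 mulr_sumr; apply: eq_bigr => i _.
by rewrite mxE normrM ger0_norm.
Qed.

Lemma norm1_eq0 (R : rcfType) (n : nat) (x : 'cV[R]_n) : norm1 x = 0 -> x = 0.
Proof.
move=> h; apply/matrixP => i j; rewrite ord1 mxE.
have := @psumr_eq0P R _ predT (fun i => `|x i 0|) (fun i _ => normr_ge0 (x i 0)) h i isT.
by move/eqP; rewrite normr_eq0 => /eqP.
Qed.

Lemma sqrt_le_r (R : rcfType) (a b : R) : 0 <= b -> a <= b ^+ 2 -> Num.sqrt a <= b.
Proof.
move=> hb hab; rewrite -(ger0_norm hb) -sqrtr_sqr; exact: ler_wsqrtr.
Qed.

Lemma wCS (R : rcfType) (I : finType) (c a : I -> R) :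
  (forall i, 0 <= c i) ->
  (\sum_i c i * a i) ^+ 2 <= (\sum_i c i) * (\sum_i c i * a i ^+ 2).
Proof.
move=> c0.
have H : 0 <= \sum_i \sum_j (c i * (c j * a j ^+ 2) + c i * a i ^+ 2 * c j
                              - 2 * (c i * a i * (c j * a j))).
  apply: sumr_ge0 => i _; apply: sumr_ge0 => j _.
  rewrite (_ : _ + _ - _ = c i * c j * (a i - a j) ^+ 2); last by ring.
  by rewrite mulr_ge0 ?sqr_ge0 ?mulr_ge0.
have E1 : \sum_i \sum_j c i * (c j * a j ^+ 2) = (\sum_i c i) * (\sum_i c i * a i ^+ 2).
  by rewrite big_distrlr.
have E2 : \sum_i \sum_j c i * a i ^+ 2 * c j = (\sum_i c i * a i ^+ 2) * (\sum_i c i).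
  by rewrite big_distrlr.
have E3 : \sum_i \sum_j c i * a i * (c j * a j) = (\sum_i c i * a i) ^+ 2.
  by rewrite expr2 big_distrlr.
have E : \sum_i \sum_j (c i * (c j * a j ^+ 2) + c i * a i ^+ 2 * c j
                              - 2 * (c i * a i * (c j * a j)))
   = \sum_i \sum_j c i * (c j * a j ^+ 2) + \sum_i \sum_j c i * a i ^+ 2 * c j
     - 2 * \sum_i \sum_j c i * a i * (c j * a j).
  rewrite mulr_sumr -big_split -sumrB /=; apply: eq_bigr => i _.
  by rewrite mulr_sumr -big_split -sumrB.
move: H; rewrite E E1 E2 E3 => H.
rewrite [(\sum_i c i * a i ^+ 2) * _]mulrC in H. lra.
Qed.

Lemma jensen (R : rcfType) (I : finType) (mu s : I -> R) :
  (forall i, 0 <= mu i) -> (forall i, 0 <= s i) -> \sum_i mu i = 1 ->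
  \sum_i mu i * Num.sqrt (s i) <= Num.sqrt (\sum_i mu i * s i).
Proof.
move=> hmu hs h1.
have := wCS (fun i => Num.sqrt (s i)) hmu; rewrite h1 mul1r.
under [X in _ <= X -> _]eq_bigr => i _ do rewrite sqr_sqrtr //.
move=> H; rewrite -(@ger0_norm _ (\sum_i mu i * Num.sqrt (s i))); last first.
  by apply: sumr_ge0 => i _; rewrite mulr_ge0 ?sqrtr_ge0.
by rewrite -sqrtr_sqr; apply: ler_wsqrtr.
Qed.

Lemma maurey (R : rcfType) (m n P : nat) (A : 'M[R]_(m,n)) (U : R) (x : 'cV[R]_n) :
  (0 < P)%N -> 0 <= U ->
  (forall z : 'cV[R]_n, leq #|[set i | z i 0 != 0]| P -> norm1 (A *m z) <= U * norm2 z) ->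
  norm1 (A *m x) <= U * Num.sqrt ((1 - P%:R^-1) * sq x + norm1 x ^+ 2 / P%:R).
Proof.
move=> hP hU hA.
have [W0|Wpos] : norm1 x = 0 \/ 0 < norm1 x.
  by have := norm1_ge0 x; rewrite le_eqVlt => /orP [/eqP <-|->]; [left|right].
  rewrite (norm1_eq0 W0) mulmx0.
  have -> : norm1 (0 : 'cV[R]_m) = 0 by rewrite /norm1 big1 // => i _; rewrite mxE normr0.
  by rewrite mulr_ge0 ?sqrtr_ge0.
set W := norm1 x.
have WP0 : W != 0 by rewrite gt_eqF.
have P0 : (P%:R : R) != 0 by rewrite pnatr_eq0 -lt0n.
pose q := fun i => `|x i 0| / W.
have q0 : forall i, 0 <= q i by move=> i; rewrite divr_ge0 // ltW.
have hq : \sum_i q i = 1 by rewrite -mulr_suml divff.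
pose mu := fun f : {ffun 'I_P -> 'I_n} => \prod_j q (f j).
have mu0 : forall f, 0 <= mu f by move=> f; apply: prodr_ge0 => j _.
have mu1 : \sum_f mu f = 1 by apply: E1.
pose cnt := fun (f : {ffun 'I_P -> 'I_n}) r => \sum_(j < P) ((f j == r)%:R : R).
pose X := fun f => (\col_r (W / P%:R * Num.sg (x r 0) * cnt f r) : 'cV[R]_n).
have mean : x = \sum_f mu f *: X f.
  apply/matrixP => r c; rewrite ord1 summxE.
  under eq_bigr => f _ do rewrite mxE mxE.
  transitivity (W / P%:R * Num.sg (x r 0) * \sum_f mu f * cnt f r).
    rewrite /mu /cnt (Ecnt P r hq) /q.
    rewrite [in LHS](numEsg (x r 0)); field; by rewrite WP0 P0.
  by rewrite mulr_sumr; apply: eq_bigr => f _; ring.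
have Ax : A *m x = \sum_f mu f *: (A *m X f).
  by rewrite {1}mean mulmx_sumr; apply: eq_bigr => f _; rewrite scalemxAr.
have sparseX : forall f, leq #|[set i | X f i 0 != 0]| P.
  move=> f; apply: (leq_trans (subset_leq_card (_ : _ \subset [set f j | j in 'I_P]))).
    apply/subsetP => i; rewrite inE mxE => /eqP hi; apply/imsetP.
    case: (pickP (fun j => f j == i)) => [j /eqP hj|hn]; first by exists j.
    exfalso; apply: hi; rewrite /cnt big1 ?mulr0 // => j _; by rewrite hn.
  by rewrite (leq_trans (leq_imset_card _ _)) // card_ord.
have step1 : norm1 (A *m x) <= U * \sum_f mu f * Num.sqrt (sq (X f)).
  rewrite Ax; apply: (le_trans (norm1_sum _)); rewrite mulr_sumr; apply: ler_sum => f _.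
  rewrite norm1Z // mulrCA; apply: ler_wpM2l => //; exact: hA.
have step2 : \sum_f mu f * sq (X f) = (1 - P%:R^-1) * sq x + W ^+ 2 / P%:R.
  transitivity (\sum_r (W / P%:R) ^+ 2 * Num.sg (x r 0) ^+ 2 * \sum_f mu f * cnt f r ^+ 2).
    under eq_bigr => f _ do rewrite /sq mulr_sumr.
    rewrite exchange_big; apply: eq_bigr => r _; rewrite mulr_sumr; apply: eq_bigr => f _.
    by rewrite mxE; ring.
  under eq_bigr => r _ do rewrite /mu /cnt (Ecnt2 P r hq).
  transitivity (\sum_r (W / P%:R * `|x r 0| + (1 - P%:R^-1) * x r 0 ^+ 2)).
    apply: eq_bigr => r _; rewrite sqr_sg /q.
    have [->|hx] := eqVneq (x r 0) 0.
      by rewrite normr0 /=; ring.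
    rewrite /= -[x r 0 ^+ 2]real_normK ?num_real //; field; by rewrite WP0 P0.
  rewrite big_split /= -!mulr_sumr /sq; rewrite -/(norm1 x) -/W; field; by rewrite P0.
apply: (le_trans step1); apply: ler_wpM2l => //; rewrite -step2; apply: jensen => // f.
exact: sq_ge0.
Qed.

Lemma div_le (R : rcfType) (a b c d : R) : 0 < c -> 0 < d -> a * d <= b * c -> a / c <= b / d.
Proof. by move=> hc hd h; rewrite ler_pdivrMr // mulrAC ler_pdivlMr. Qed.

Lemma alg1 (R : rcfType) (k p : nat) (beta th Rr FB rho2 : R) :
  (1 <= k)%N -> 0 < beta -> beta < p.+1%:R -> 0 <= th -> th <= Rr ->
  p%:R * th <= FB -> rho2 <= th * Rr -> 0 <= rho2 ->
  (1 - (k + p)%:R^-1) * rho2 + Rr ^+ 2 / (k + p)%:R <= (FB + Rr) ^+ 2 / beta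
  /\ rho2 <= (FB + Rr) ^+ 2 / beta.
Proof.
move=> hk hb hbp th0 thR hFB hr r0.
have R0 : 0 <= Rr by apply: le_trans thR.
have kr : (1 : R) <= k%:R by rewrite ler1n.
have pr : (0 : R) <= p%:R by rewrite ler0n.
have FB0 : 0 <= FB by apply: le_trans hFB; rewrite mulr_ge0.
set X2 := (FB + Rr) ^+ 2.
have X20 : 0 <= X2 by rewrite sqr_ge0.
have hX : (p%:R * th + Rr) ^+ 2 <= X2.
  rewrite /X2 lerXn2r ?nnegrE ?addr_ge0 ?mulr_ge0 //; lra.
have hp1 : (0 : R) < p.+1%:R by rewrite ltr0n.
have hchain : X2 / p.+1%:R <= X2 / beta.
  by apply: div_le => //; apply: ler_wpM2l => //; apply: ltW.
have kp0 : (0 : R) < (k + p)%:R by rewrite ltr0n addn_gt0 hk.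
have hpS : (p.+1%:R : R) = p%:R + 1 by rewrite -natr1.
have hkp : ((k + p)%:R : R) = k%:R + p%:R by rewrite natrD.
have thR2 : th * Rr <= Rr ^+ 2 by rewrite expr2 ler_wpM2r.
split.
  apply: le_trans hchain.
  have -> : (1 - (k + p)%:R^-1) * rho2 + Rr ^+ 2 / (k + p)%:R
         = ((k%:R + p%:R - 1) * rho2 + Rr ^+ 2) / (k + p)%:R.
    by rewrite hkp; field; rewrite -hkp gt_eqF.
  apply: div_le => //; rewrite hpS hkp.
  have h1 : (k%:R + p%:R - 1) * rho2 <= (k%:R + p%:R - 1) * (th * Rr).
    by apply: ler_wpM2l => //; lra.
  have [p0|p1] : p = 0%N \/ (1 <= p)%N by case: (p) => [|q]; [left|right].
    move: h1 hX; rewrite p0 !mul0r !add0r addr0 => h1 hX.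
    nra.
  have pr1 : (1 : R) <= p%:R by rewrite ler1n.
  have key : 0 <= (k%:R + p%:R) * (p%:R ^+ 2 * th ^+ 2)
     + ((k%:R + p%:R) * (p%:R - 1) + p%:R + 1) * (th * Rr) + (k%:R - 1) * Rr ^+ 2.
    apply: addr_ge0; [apply: addr_ge0|].
    - apply: mulr_ge0; [lra| by rewrite mulr_ge0 ?sqr_ge0].
    - apply: mulr_ge0; [nra| by rewrite mulr_ge0].
    - apply: mulr_ge0; [lra| by rewrite sqr_ge0].
  nra.
apply: le_trans hchain; rewrite ler_pdivlMr // hpS.
have [p0|p1] : p = 0%N \/ (1 <= p)%N by case: (p) => [|q]; [left|right].
  move: hX; rewrite p0 !mul0r !add0r => hX; nra.
have pr1 : (1 : R) <= p%:R by rewrite ler1n.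
nra.
Qed.

Lemma alg_final (R : rcfType) (alpha Delta L U s V Y Vs X Nv Ny Nr : R) :
  0 < alpha -> 0 <= Delta -> 0 < L -> L <= U -> 0 < s ->
  0 <= Vs -> Vs <= Y -> Y <= V -> V <= Y + X -> 0 <= X ->
  X * (alpha * s) <= Delta + s * Vs ->
  L * Y <= Ny -> Ny <= U * Y -> Nr <= U * X -> 0 <= Nv ->
  Ny - Nr <= Nv -> Nv <= Ny + Nr ->
  L / (1 + alpha) * (alpha - U / L) * V - 2 * U * Delta / (alpha * s) <= Nv /\
  Nv <= U * (1 + alpha^-1) * V + U * Delta / (alpha * s).
Proof.
move=> ha hD hL hLU hs hVs hVsY hYV hVYX hX hXW hLY hNyU hNr hNv hlo hup.
set E := Delta / (alpha * s).
have as0 : 0 < alpha * s by rewrite mulr_gt0.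
have E0 : 0 <= E by rewrite divr_ge0 // ltW.
have hXE : X <= E + Y / alpha.
  have : X <= (Delta + s * Vs) / (alpha * s) by rewrite ler_pdivlMr.
  have -> : (Delta + s * Vs) / (alpha * s) = E + Vs / alpha.
    by rewrite /E; field; rewrite !gt_eqF.
  move=> h; apply: le_trans h _; rewrite lerD2l ler_pM2r ?invr_gt0 //.
have U0 : 0 <= U by lra.
have Y0 : 0 <= Y by lra.
set iA := alpha^-1.
have iA0 : 0 < iA by rewrite invr_gt0.
have hYa : Y / alpha = Y * iA by [].
rewrite hYa in hXE.
have e1 : U * Delta / (alpha * s) = U * E by rewrite /E mulrA.
have e2 : 2 * U * Delta / (alpha * s) = 2 * U * E by rewrite /E mulrA.
have e3 : L / (1 + alpha) * (alpha - U / L) = (L * alpha - U) / (1 + alpha).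
  by field; rewrite !gt_eqF // ?addr_gt0.
rewrite e1 e2 e3; split; last first.
  have : U * X <= U * (E + Y * iA) by rewrite ler_wpM2l.
  have : U * (Y * iA) <= U * (V * iA) by rewrite ler_wpM2l // ler_wpM2r // ltW.
  nra.
have a1 : 0 < 1 + alpha by lra.
have [hneg|hpos] := lerP (L * alpha) U.
  have : (L * alpha - U) / (1 + alpha) * V <= 0.
    rewrite mulr_le0_ge0 //; [rewrite pmulr_lle0 ?invr_gt0 //; lra | lra].
  nra.
set c := (L * alpha - U) / (1 + alpha).
have c0 : 0 <= c by rewrite divr_ge0 ?ltW // subr_gt0.
have hc1 : c + U = alpha * (L + U) / (1 + alpha) by rewrite /c; field; rewrite gt_eqF.
have hc2 : L - c = (L + U) / (1 + alpha) by rewrite /c; field; rewrite gt_eqF.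
have hcV : c * V <= c * (Y + X) by rewrite ler_wpM2l.
have hiA : alpha * iA = 1 by rewrite mulfV ?gt_eqF.
have k1 : (c + U) * X <= (c + U) * (E + Y * iA) by rewrite ler_wpM2l // addr_ge0.
have k2 : (c + U) * (Y * iA) = (L - c) * Y.
  rewrite hc1 hc2; rewrite /iA; field; rewrite !gt_eqF //.
have k3 : (c + U) * E <= 2 * U * E.
  apply: ler_wpM2r => //; rewrite hc1 ler_pdivrMr //; nra.
nra.
Qed.

Lemma norm1D (R : rcfType) (m : nat) (x y : 'cV[R]_m) : norm1 (x + y) <= norm1 x + norm1 y.
Proof. rewrite /norm1 -big_split /=; apply: ler_sum => i _; rewrite mxE; exact: ler_normD. Qed.

Lemma norm1N (R : rcfType) (m : nat) (x : 'cV[R]_m) : norm1 (- x) = norm1 x.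
Proof. by rewrite /norm1; apply: eq_bigr => i _; rewrite mxE normrN. Qed.

Lemma norm1_restr (R : rcfType) (n : nat) (T : {set 'I_n}) (v : 'cV[R]_n) :
  norm1 (restr T v) = \sum_i (if i \in T then `|v i 0| else 0).
Proof. rewrite /norm1; apply: eq_bigr => i _; rewrite mxE; case: ifP => _ //; exact: normr0. Qed.

Lemma sq_restr (R : rcfType) (n : nat) (T : {set 'I_n}) (v : 'cV[R]_n) :
  sq (restr T v) = \sum_i (if i \in T then v i 0 ^+ 2 else 0).
Proof. rewrite /sq; apply: eq_bigr => i _; rewrite mxE; case: ifP => _ //; exact: expr0n. Qed.

Lemma CS_restr (R : rcfType) (n : nat) (T : {set 'I_n}) (v : 'cV[R]_n) :
  norm1 (restr T v) <= Num.sqrt (#|T|%:R) * norm2 (restr T v).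
Proof.
have := wCS (fun i => `|v i 0|) (fun i => ler0n R (i \in T)).
have -> : \sum_i ((i \in T)%:R : R) = #|T|%:R.
  rewrite (eq_bigr (fun i => if i \in T then 1 else 0)); last by move=> i _; case: (i \in T).
  by rewrite -big_mkcond sumr_const.
have -> : \sum_i (i \in T)%:R * `|v i 0| = norm1 (restr T v).
  by rewrite norm1_restr; apply: eq_bigr => i _; case: (i \in T); rewrite ?mul1r ?mul0r.
have -> : \sum_i (i \in T)%:R * `|v i 0| ^+ 2 = sq (restr T v).
  rewrite sq_restr; apply: eq_bigr => i _; case: (i \in T); rewrite ?mul1r ?mul0r //.
  by rewrite real_normK ?num_real.
move=> h; rewrite /norm2 -/(sq (restr T v)) -sqrtrM ?ler0n //.
rewrite -(ger0_norm (norm1_ge0 (restr T v))) -sqrtr_sqr; exact: ler_wsqrtr.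
Qed.

Lemma sqrtD_le (R : rcfType) (a b : R) : 0 <= a -> 0 <= b ->
  Num.sqrt (a + b) <= Num.sqrt a + Num.sqrt b.
Proof.
move=> ha hb; apply: sqrt_le_r; first by rewrite addr_ge0 ?sqrtr_ge0.
rewrite sqrrD !sqr_sqrtr //; have := mulr_ge0 (sqrtr_ge0 a) (sqrtr_ge0 b); lra.
Qed.

Unset Implicit Arguments.

Theorem lemma3p3 (R : rcfType) (m n k : nat) (A : 'M[R]_(m, n))
  (alpha Delta L U : R) (S : {set 'I_n}) :
  (1 <= k)%N -> 0 < alpha -> 0 <= Delta -> 0 < L -> L <= U ->
  (forall v : 'cV[R]_n, sparse ((1 + alpha ^+ 2) * k%:R) v ->
     L * norm2 v <= norm1 (A *m v) /\ norm1 (A *m v) <= U * norm2 v) ->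
  #|S| = k ->
  forall v : 'cV[R]_n,
    Delta + norm1 (restr S v) >= norm1 (restr (~: S) v) ->
    L / (1 + alpha) * (alpha - U / L) * norm2 v
      - 2 * U * Delta / (alpha * Num.sqrt k%:R) <= norm1 (A *m v)
    /\ norm1 (A *m v) <= U * (1 + alpha^-1) * norm2 v
      + U * Delta / (alpha * Num.sqrt k%:R).
Proof.
move=> hk ha hD hL hLU hA hS v hv.
set beta := alpha ^+ 2 * k%:R.
have kpos : (0 : R) < k%:R by rewrite ltr0n.
have hbeta : 0 < beta by rewrite mulr_gt0 ?exprn_gt0.
have hbud : (1 + alpha ^+ 2) * k%:R = k%:R + beta by rewrite /beta; ring.
have hU0 : 0 <= U by apply: le_trans (ltW hL) hLU.
pose Pp := fun j : 'I_n.+1 => ((j : nat)%:R <= beta).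
have P0 : Pp ord0 by rewrite /Pp /= ltW.
case: (arg_maxnP (fun j : 'I_n.+1 => (j : nat)) P0) => pj hpj pmax.
set p := nat_of_ord pj.
have hp1 : p%:R <= beta := hpj.
have hp2 : (p < n)%N -> beta < p.+1%:R.
  move=> hlt; rewrite ltNge; apply/negP => hle.
  have := pmax (Ordinal (hlt : (p.+1 < n.+1)%N)) hle.
  by rewrite /= ltnn.
pose F := fun B : {set 'I_n} => \sum_(i in B) `|v i 0|.
pose PB := fun B : {set 'I_n} => (B \subset ~: S) && (#|B| <= p)%N.
have PB0 : PB set0 by rewrite /PB sub0set cards0.
case: (@arg_maxP _ R _ set0 PB F PB0) => B /andP [hBS hBp] Bmax.
set T := S :|: B.
set y := restr T v.
set r := restr (~: T) v.
have hvyr : v = y + r.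
  apply/colP => i; rewrite !mxE in_setC; by case: (i \in T); rewrite ?addr0 ?add0r.
have hTcard : (#|T| <= k + p)%N.
  rewrite /T cardsU -hS; apply: leq_trans (leq_subr _ _) _; by rewrite leq_add2l.
have hy_sp : sparse ((1 + alpha ^+ 2) * k%:R) y.
  rewrite /sparse hbud; apply: (@le_trans _ _ ((k + p)%:R)); last by rewrite natrD lerD2l.
  rewrite ler_nat; apply: (leq_trans _ hTcard); apply: subset_leq_card.
  apply/subsetP => i; rewrite inE mxE; by case: (i \in T) => //; rewrite eqxx.
have [hyL hyU] := hA y hy_sp.
have hM : forall z : 'cV[R]_n, leq #|[set i | z i 0 != 0]| (k + p) ->
    norm1 (A *m z) <= U * norm2 z.
  move=> z hz; apply: (proj2 (hA z _)); rewrite /sparse hbud.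
  apply: (@le_trans _ _ ((k + p)%:R)); first by rewrite ler_nat.
  by rewrite natrD lerD2l.
have hkp : (0 < k + p)%N by rewrite addn_gt0 hk.
have hMr := maurey r hkp hU0 hM.
set W := norm1 (restr (~: S) v).
set Rr := norm1 r.
set rho2 := sq r.
have hK : (1 - (k + p)%:R^-1) * rho2 + Rr ^+ 2 / (k + p)%:R <= W ^+ 2 / beta
          /\ rho2 <= W ^+ 2 / beta.
  have [hz|[j0 hj0 hv0]] : (forall j, j \in ~: T -> v j 0 = 0) \/
                            exists2 j0, j0 \in ~: T & v j0 0 != 0.
    case: (pickP (fun j => (j \in ~: T) && (v j 0 != 0))) => [j0 /andP [h1 h2]|hn].
      by right; exists j0.
    left => j hj; apply/eqP; have := hn j; rewrite hj /=; exact: negbFE.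
    have r0 : rho2 = 0.
      by rewrite /rho2 /r sq_restr big1 // => i _; case: ifP => // /hz ->; rewrite expr0n.
    have R0 : Rr = 0.
      by rewrite /Rr /r norm1_restr big1 // => i _; case: ifP => // /hz ->; rewrite normr0.
    rewrite r0 R0 mulr0 expr0n /= mul0r addr0; split; by rewrite divr_ge0 ?sqr_ge0 ?ltW.
  have notT : forall j, j \in ~: T -> (j \notin S) && (j \notin B).
    by move=> j; rewrite in_setC /T inE negb_or.
  have hj0S : j0 \in ~: S by rewrite in_setC; case/andP: (notT _ hj0).
  have hj0B : j0 \notin B by case/andP: (notT _ hj0).
  have hBeq : #|B| = p.
    apply/eqP; rewrite eqn_leq hBp /= leqNgt; apply/negP => hlt.
    have PB1 : PB (j0 |: B).
      by rewrite /PB subUset sub1set hj0S hBS cardsU1 hj0B.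
    have := Bmax _ PB1; rewrite /F big_setU1 //= => h.
    have : `|v j0 0| <= 0 by move: h; rewrite -/(F B); lra.
    by rewrite normr_le0 (negbTE hv0).
  case: (@arg_maxP _ R _ j0 (fun j => j \in ~: T) (fun j => `|v j 0|) hj0) => jm hjm jmax.
  set th := `|v jm 0|.
  have th0 : 0 <= th by rewrite normr_ge0.
  have hjmS : jm \in ~: S by rewrite in_setC; case/andP: (notT _ hjm).
  have hjmB : jm \notin B by case/andP: (notT _ hjm).
  have hexch : forall i, i \in B -> th <= `|v i 0|.
    move=> i hi; rewrite leNgt; apply/negP => hlt.
    have PB1 : PB (jm |: (B :\ i)).
      rewrite /PB subUset sub1set hjmS (subset_trans (subD1set B i) hBS) /=.
      rewrite cardsU1 in_setD1 (negbTE hjmB) andbF /=.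
      by move: hBp; rewrite (cardsD1 i B) hi.
    have := Bmax _ PB1; rewrite /F big_setU1 /=; last by rewrite in_setD1 (negbTE hjmB) andbF.
    move=> h; rewrite [X in _ <= X](big_setD1 i hi) /= in h.
    have : th <= `|v i 0| by move: h; rewrite -/th; lra.
    by rewrite leNgt hlt.
  have hpth : p%:R * th <= F B.
    rewrite mulr_natl -hBeq -sumr_const /F; apply: ler_sum => i hi; exact: hexch.
  have hrho : rho2 <= th * Rr.
    rewrite /rho2 /Rr /r sq_restr norm1_restr mulr_sumr; apply: ler_sum => i _.
    case: ifP => hi; last by rewrite mulr0.
    rewrite -real_normK ?num_real // expr2 ler_wpM2r //; exact: jmax.
  have hthR : th <= Rr.
    rewrite /Rr /r norm1_restr (bigD1 jm) //= hjm lerDl.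
    by apply: sumr_ge0 => i _; case: ifP.
  have hW : W = F B + Rr.
    rewrite /W /Rr /r !norm1_restr /F [\sum_(i in B) _]big_mkcond -big_split /=; apply: eq_bigr => i _.
    rewrite !in_setC /T inE.
    case hiB: (i \in B).
      have := subsetP hBS i hiB; rewrite in_setC => ->; rewrite orbT /= addr0 //.
    by rewrite orbF; case: (i \in S); rewrite /= ?add0r ?addr0.
  have hpn : (p < n)%N.
    have := max_card (mem (j0 |: B)); rewrite card_ord cardsU1 hj0B hBeq; exact.
  have := alg1 hk hbeta (hp2 hpn) th0 hthR hpth hrho (sq_ge0 r).
  by rewrite -hW.
have hsk : 0 < Num.sqrt (k%:R : R) by rewrite sqrtr_gt0.
set X := W / (alpha * Num.sqrt k%:R).
have X0 : 0 <= X by rewrite divr_ge0 ?norm1_ge0 // mulr_ge0 ?ltW.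
have hX2 : X ^+ 2 = W ^+ 2 / beta.
  by rewrite /X /beta expr_div_n exprMn sqr_sqrtr ?ler0n.
have HAr : norm1 (A *m r) <= U * X.
  apply: le_trans hMr _; apply: ler_wpM2l => //; apply: sqrt_le_r => //.
  by rewrite hX2; exact: hK.1.
have Hr2 : norm2 r <= X by apply: sqrt_le_r => //; rewrite hX2; exact: hK.2.
have HCS := CS_restr S v; rewrite hS in HCS.
have HW : X * (alpha * Num.sqrt k%:R) <= Delta + Num.sqrt k%:R * norm2 (restr S v).
  rewrite /X divfK ?gt_eqF ?mulr_gt0 //; rewrite -/W in hv; lra.
have hsqv : sq v = sq y + sq r.
  rewrite /y /r !sq_restr /sq -big_split; apply: eq_bigr => i _.
  by rewrite in_setC /=; case: (i \in T); rewrite /= ?addr0 ?add0r.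
have hsqS : sq (restr S v) <= sq y.
  rewrite /y !sq_restr; apply: ler_sum => i _; case: ifP => hi.
    by rewrite /T inE hi.
  by case: ifP => _ //; rewrite sqr_ge0.
have hVsY : norm2 (restr S v) <= norm2 y by apply: ler_wsqrtr.
have hYV : norm2 y <= norm2 v.
  by apply: ler_wsqrtr; rewrite -/(sq v) hsqv lerDl sq_ge0.
have hVYX : norm2 v <= norm2 y + X.
  rewrite /norm2 -/(sq v) hsqv; apply: le_trans (sqrtD_le (sq_ge0 _) (sq_ge0 _)) _.
  by rewrite lerD2l.
have hup : norm1 (A *m v) <= norm1 (A *m y) + norm1 (A *m r).
  have -> : A *m v = A *m y + A *m r by rewrite {1}hvyr mulmxDr.
  exact: norm1D.
have hlo : norm1 (A *m y) - norm1 (A *m r) <= norm1 (A *m v).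
  have -> : A *m y = A *m v + - (A *m r) by rewrite hvyr mulmxDr addrK.
  have := norm1D (A *m v) (- (A *m r)); rewrite norm1N; lra.
exact: (alg_final ha hD hL hLU hsk (sqrtr_ge0 _) hVsY hYV hVYX X0 HW hyL hyU HAr
  (norm1_ge0 _) hlo hup).
Qed.
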